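(* Let $\mathcal{G}=(\mathcal{V},\mathcal{E})$ be a finite tree with at least one edge and let $i\in\mathcal{V}$ have degree $d_i$. Then the return time of the begrudgingly backtracking random walk at $i$ is $$\tilde{\mathtt{t}}(i;\mathcal{G})=\frac{2|\mathcal{E}|}{d_i}.$$
   Context: Begrudgingly backtracking random walk (BBRW) on $\mathcal{G}$: $x_1$ is uniform on the neighbors of $x_0$; for $n\ge0$, given $x_n=u,x_{n+1}=v$, $x_{n+2}$ is uniform on $\mathcal{N}(v)\setminus\{u\}$ if this set is nonempty, and $x_{n+2}=u$ otherwise. With $\overline{T}_i=\min\{n>0:x_n=i\}$, the return time is $\tilde{\mathtt{t}}(i;\mathcal{G})=\mathbb{E}[\overline{T}_i\mid x_0=i]$. *)

(* Defs.v *)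
From HB Require Import structures.
From mathcomp Require Import all_boot all_order all_algebra.
From mathcomp Require Import all_classical all_reals topology normedtype sequences.
Set Implicit Arguments. Unset Strict Implicit. Unset Printing Implicit Defensive.
Import Order.TTheory GRing.Theory Num.Theory.
Local Open Scope ring_scope.

Section BBRW.
Variables (T : finType) (e : rel T).

Definition simple_graph : Prop := symmetric e /\ irreflexive e.

Definition edges : {set {set T}} :=
  [set E : {set T} | [exists x, exists y, e x y && (E == [set x; y])]].

Definition nbr (v : T) : {set T} := [set w | e v w].
Definition deg (v : T) : nat := #|nbr v|.

Definition is_tree : Prop :=
  (forall x y : T, connect e x y) /\
  (forall c : seq T, uniq c -> (2 < size c)%N -> ~~ cycle e c).

Variable R : realType.

(* BBRW second-order transition: probability that x_{n+2} = w given
   x_n = u, x_{n+1} = v. *)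
Definition bbrw_step (u v w : T) : R :=
  let S := nbr v :\ u in
  if #|S| == 0%N then (w == u)%:R else (w \in S)%:R / #|S|%:R.

Definition bbrw_path_prob (i : T) (n : nat) (x : (n.+2).-tuple T) : R :=
  (nth i x 0 == i)%:R * ((e i (nth i x 1))%:R / (deg i)%:R) *
  \prod_(k < n) bbrw_step (nth i x k) (nth i x k.+1) (nth i x k.+2).

(* P(Tbar_i = m | x_0 = i), Tbar_i = min {n > 0 : x_n = i} *)
Definition bbrw_return_dist (i : T) (m : nat) : R :=
  match m with
  | 0 => 0
  | n.+1 =>
    \sum_(x : (n.+2).-tuple T |
            (nth i x 0 == i) && (nth i x n.+1 == i) &&
            [forall k : 'I_n.+2, ((0 < k) && (k < n.+1))%N ==> (nth i x k != i)])
       bbrw_path_prob i x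
  end.

End BBRW.

(* Main.v *)
Require Import Defs.
From HB Require Import structures.
From mathcomp Require Import all_boot all_order all_algebra.
From mathcomp Require Import all_classical all_reals topology normedtype sequences.
From mathcomp Require Import ring lra zify.
Import Order.TTheory GRing.Theory Num.Theory numFieldNormedType.Exports.
Local Open Scope classical_set_scope.
Local Open Scope ring_scope.
Section Walk.
Variables (R : realType) (T : finType) (e : rel T) (i : T).

Notation step := (bbrw_step e R).

Lemma step_ge0 u v w : 0 <= step u v w.
Proof. rewrite /bbrw_step /=; case: ifP => _; first by rewrite ler0n. by rewrite divr_ge0 ?ler0n. Qed.

Lemma step_sum u v : \sum_w step u v w = 1.
Proof.
rewrite /bbrw_step /=; have [z|nz] := eqVneq #|nbr e v :\ u| 0%N.
  by rewrite (bigD1 u) //= eqxx big1 ?addr0 // => w /negbTE ->.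
rewrite -mulr_suml.
have -> : \sum_w ((w \in nbr e v :\ u)%:R : R) = #|nbr e v :\ u|%:R.
  rewrite -sum1_card natr_sum [RHS]big_mkcond /=.
  by apply: eq_bigr => w _; case: (w \in _).
by rewrite divff // pnatr_eq0.
Qed.

Fixpoint Sv n u v : R :=
  match n with 0 => 1 | n'.+1 => (v != i)%:R * \sum_w step u v w * Sv n' v w end.
Fixpoint G n u v : R :=
  match n with 0 => (v == i)%:R | n'.+1 => (v != i)%:R * \sum_w step u v w * G n' v w end.

Lemma Sv_bnd n u v : 0 <= Sv n u v <= 1.
Proof.
elim: n u v => [|n IH] u v /=; first by rewrite ler01 lexx.
case: (v != i); rewrite ?mul0r ?lexx ?ler01 // mul1r.
apply/andP; split.
  by apply: sumr_ge0 => w _; rewrite mulr_ge0 ?step_ge0 //; case/andP: (IH v w).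
rewrite -(step_sum u v) ler_sum // => w _.
by rewrite ler_piMr ?step_ge0 //; case/andP: (IH v w).
Qed.

Lemma Sv_ge0 n u v : 0 <= Sv n u v. Proof. by case/andP: (Sv_bnd n u v). Qed.
Lemma Sv_le1 n u v : Sv n u v <= 1. Proof. by case/andP: (Sv_bnd n u v). Qed.

Lemma G_Sv n u v : G n u v = Sv n u v - Sv n.+1 u v.
Proof.
elim: n u v => [|n IH] u v /=.
  under eq_bigr do rewrite mulr1.
  by rewrite step_sum mulr1; case: (v == i); rewrite /= ?subr0 ?subrr.
rewrite -mulrBr; congr (_ * _).
rewrite -sumrB; apply: eq_bigr => w _; by rewrite IH mulrBr.
Qed.

Lemma G_ge0 n u v : 0 <= G n u v.
Proof.
elim: n u v => [|n IH] u v /=; first by rewrite ler0n.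
by rewrite mulr_ge0 ?ler0n // sumr_ge0 // => w _; rewrite mulr_ge0 ?step_ge0.
Qed.

Lemma Sv_mono n u v : Sv n.+1 u v <= Sv n u v.
Proof. by rewrite -subr_ge0 -G_Sv G_ge0. Qed.

Lemma Sv_monon m n u v : (m <= n)%N -> Sv n u v <= Sv m u v.
Proof.
move=> /subnK <-; elim: (n - m)%N => [|k IH] //=.
exact: le_trans (Sv_mono _ _ _) IH.
Qed.

Fixpoint pp u v (s : seq T) : R :=
  match s with [::] => 1 | w :: s' => step u v w * pp v w s' end.
Fixpoint cnd v (s : seq T) : bool :=
  match s with [::] => v == i | w :: s' => (v != i) && cnd w s' end.

Lemma sum_tuple_cons (V : nmodType) m (F : m.+1.-tuple T -> V) :
  \sum_(t : m.+1.-tuple T) F t = \sum_(a : T) \sum_(s : m.-tuple T) F [tuple of a :: s].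
Proof.
rewrite pair_big /=.
rewrite (reindex (fun p : T * m.-tuple T => [tuple of p.1 :: p.2])) //=.
exists (fun t => (thead t, [tuple of behead t])) => [[a s] _|t _] /=.
  by congr (_, _); apply: val_inj.
by rewrite -tuple_eta.
Qed.

Lemma sum_tuple0 (V : nmodType) (F : 0.-tuple T -> V) : \sum_(t : 0.-tuple T) F t = F [tuple].
Proof. by rewrite (big_pred1 [tuple]) // => t /=; symmetry; apply/eqP; exact: tuple0. Qed.

Lemma G_tuple n u v : \sum_(s : n.-tuple T) pp u v s * (cnd v s)%:R = G n u v.
Proof.
elim: n u v => [|n IH] u v; first by rewrite sum_tuple0 /= mul1r.
rewrite sum_tuple_cons /=; case: (v != i) => /=; last first.
  by rewrite mul0r big1 // => w _; rewrite big1 // => s _; rewrite mulr0.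
rewrite mul1r; apply: eq_bigr => w _; rewrite -IH mulr_sumr.
by apply: eq_bigr => s _; rewrite mulrA.
Qed.

Lemma prod_pp a b s n : size s = n ->
  \prod_(k < n) step (nth i [:: a, b & s] k) (nth i [:: a, b & s] k.+1)
      (nth i [:: a, b & s] k.+2) = pp a b s.
Proof.
elim: s a b n => [|w s IH] a b n <- /=; first by rewrite big_ord0.
by rewrite big_ord_recl /= (IH b w).
Qed.

Lemma cndP b s : cnd b s = (last b s == i) &&
   [forall k : 'I_(size s), nth i (b :: s) k != i].
Proof.
elim: s b => [|w s IH] b /=.
  by rewrite andb_idr // => _; apply/forallP => -[].
rewrite IH; apply/idP/idP.
  case/and3P => bi li /forallP H; rewrite li /=; apply/forallP => -[[|k] lk] //=.
  by have := H (Ordinal (lk : k < size s)%N).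
case/andP => li /forallP H; rewrite li.
have := H (Ordinal (ltn0Sn (size s))) => /= -> /=.
by apply/forallP => -[k lk]; have := H (Ordinal (lk : k.+1 < (size s).+1)%N).
Qed.

Lemma cond_cnd a b s n : size s = n ->
  (nth i (b :: s) n == i) &&
  [forall k : 'I_n.+2, ((0 < k) && (k < n.+1))%N ==> (nth i [:: a, b & s] k != i)]
  = cnd b s.
Proof.
move=> sz; rewrite cndP -sz /=.
have -> : nth i (b :: s) (size s) = last b s.
  by rewrite -[size s]/((size (b :: s)).-1) nth_last.
congr (_ && _); apply/idP/idP.
  move/forallP => H; apply/forallP => -[k lk].
  have lk' : (k.+1 < (size s).+2)%N by lia.
  by have := H (Ordinal lk'); rewrite /= ltnS lk.
move/forallP => H; apply/forallP => -[[|k] lk] //=; apply/implyP => lk2.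
by have := H (Ordinal (lk2 : k < size s)%N).
Qed.

Lemma rd_eq n : bbrw_return_dist e R i n.+1 =
   \sum_v ((e i v)%:R / (deg e i)%:R) * G n i v.
Proof.
rewrite /bbrw_return_dist /= big_mkcond /=.
rewrite sum_tuple_cons (bigD1 i) //=.
rewrite [X in _ + X]big1 ?addr0; last first.
  by move=> a ai; apply: big1 => s _; rewrite /= (negbTE ai).
rewrite sum_tuple_cons; apply: eq_bigr => b _.
rewrite -G_tuple mulr_sumr; apply: eq_bigr => s _.
rewrite /= eqxx /=.
rewrite (@cond_cnd i b s n (size_tuple s)) /bbrw_path_prob /= eqxx mul1r.
rewrite (@prod_pp i b s n (size_tuple s)).
by case: (cnd b s); rewrite ?mulr1 ?mulr0.
Qed.

End Walk.
Section Graph.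
Variables (R : realType) (T : finType) (e : rel T) (i : T).
Hypothesis esym : symmetric e.
Hypothesis eirr : irreflexive e.
Notation step := (bbrw_step e R).
Notation Sv := (@Sv R T e i).

Lemma stat v w : \sum_u (e u v)%:R * step u v w = (e v w)%:R :> R.
Proof.
have -> : \sum_u (e u v)%:R * step u v w = \sum_(u in nbr e v) step u v w.
  rewrite [RHS]big_mkcond; apply: eq_bigr => u _; rewrite finset.in_set esym.
  by case: (e v u); rewrite ?mul1r ?mul0r.
case ew: (e v w); last first.
  rewrite big1 // => u uv; rewrite /bbrw_step /=.
  have wu : w != u.
    by apply: contraFneq ew => ->; rewrite finset.in_set in uv.
  case: ifP => _; first by rewrite (negbTE wu).
  by rewrite in_setD1 (negbTE wu) /= finset.in_set ew mul0r.
have [d1|d1] := eqVneq (deg e v) 1%N.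
  move/eqP: d1; rewrite /deg => /cards1P[a Ha]; rewrite Ha big_set1 /bbrw_step /= Ha finset.setDv cards0 eqxx /=.
  have : w \in nbr e v by rewrite finset.in_set.
  by rewrite Ha inE => /eqP ->; rewrite eqxx.
have dpos : (0 < deg e v)%N by apply/card_gt0P; exists w; rewrite finset.in_set.
have dn0 : ((deg e v).-1 == 0%N) = false.
  by move: dpos d1; case: (deg e v) => [|[|d]].
transitivity (\sum_(u in nbr e v) (w != u)%:R / ((deg e v).-1)%:R : R).
  apply: eq_bigr => u uv; rewrite /bbrw_step /=.
  have cS : #|nbr e v :\ u| = (deg e v).-1 by rewrite /deg (cardsD1 u (nbr e v)) uv.
  by rewrite cS dn0 in_setD1 finset.in_set ew andbT eq_sym.
rewrite -mulr_suml.
have -> : \sum_(u in nbr e v) ((w != u)%:R : R) = ((deg e v).-1)%:R.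
  rewrite -natr_sum big_mkcond /=.
  rewrite (eq_bigr (fun u => if u \in nbr e v :\ w then 1%N else 0%N)); last first.
    by move=> u _; rewrite in_setD1 eq_sym; case: (u \in nbr e v); case: (u != w).
  by rewrite -big_mkcond sum1_card /deg (cardsD1 w (nbr e v)) finset.in_set ew.
by rewrite divff // pnatr_eq0 dn0.
Qed.

Lemma deg_sum v : \sum_w (e v w)%:R = (deg e v)%:R :> R.
Proof.
rewrite /deg -sum1_card natr_sum [RHS]big_mkcond; apply: eq_bigr => w _.
by rewrite finset.in_set; case: (e v w).
Qed.

Lemma edge_count : \sum_u \sum_v (e u v)%:R = (2 * #|edges e|)%:R :> R.
Proof.
have -> : \sum_u \sum_v (e u v)%:R = (\sum_(p : T * T | e p.1 p.2) 1%N)%:R :> R.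
  rewrite pair_big natr_sum [RHS]big_mkcond; apply: eq_bigr => -[u v] _ /=.
  by case: (e u v).
congr (_%:R).
rewrite (partition_big (fun p : T * T => [set p.1; p.2]%SET) (fun E => E \in edges e)); last first.
  move=> [u v] /= uv; rewrite finset.in_set; apply/existsP; exists u; apply/existsP; exists v.
  by rewrite uv eqxx.
rewrite mulnC -sum_nat_const; apply: eq_bigr => E.
rewrite finset.in_set => /existsP[x /existsP[y /andP[xy /eqP ->]]].
have xny : x != y by apply: contraTneq xy => ->; rewrite eirr.
rewrite (eq_bigl (fun p => p \in [set (x, y); (y, x)]%SET)); last first.
  move=> [a b] /=; rewrite !inE; apply/idP/idP.
    case/andP => ab /eqP EE.
    have anb : a != b by apply: contraTneq ab => ->; rewrite eirr.
    have : a \in [set x; y]%SET by rewrite -EE !inE eqxx.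
    have : b \in [set x; y]%SET by rewrite -EE !inE eqxx orbT.
    rewrite !inE => /orP[] /eqP bE /orP[] /eqP aE; subst.
    - by rewrite eqxx in anb.
    - by rewrite eqxx orbT.
    - by rewrite eqxx.
    - by rewrite eqxx in anb.
  case/orP => /eqP[-> ->]; rewrite ?xy ?eqxx //.
  by rewrite esym xy finset.setUC eqxx.
rewrite sum1_card cards2.
by rewrite xpair_eqE negb_and xny.
Qed.

Lemma Phi_step n :
  \sum_u \sum_v (e u v)%:R * Sv n.+1 u v =
  \sum_u \sum_v (e u v)%:R * Sv n u v - \sum_w (e i w)%:R * Sv n i w :> R.
Proof.
have C1 : \sum_u \sum_v (e u v)%:R * Sv n u v =
   \sum_u \sum_v (e u v)%:R * \sum_w step u v w * Sv n v w :> R.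
  rewrite [RHS]exchange_big /=; apply: eq_bigr => v _.
  rewrite [RHS](eq_bigr (fun u => \sum_w (e u v)%:R * (step u v w * Sv n v w))); last first.
    by move=> u _; rewrite mulr_sumr.
  rewrite exchange_big; apply: eq_bigr => w _; rewrite -stat mulr_suml.
  by apply: eq_bigr => u _; rewrite mulrA.
have C2 u : \sum_v (e u v)%:R * \sum_w step u v w * Sv n v w =
   \sum_v (e u v)%:R * Sv n.+1 u v + (e u i)%:R * \sum_w step u i w * Sv n i w :> R.
  rewrite (bigD1 i) //= [X in _ = X + _](bigD1 i) //= eqxx /= mul0r mulr0 add0r addrC.
  by congr (_ + _); apply: eq_bigr => v vi; rewrite vi mul1r.
rewrite C1 (eq_bigr _ (fun u _ => C2 u)) big_split /=.
have -> : \sum_u (e u i)%:R * \sum_w step u i w * Sv n i w =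
          \sum_w (e i w)%:R * Sv n i w :> R.
  under eq_bigr do rewrite mulr_sumr.
  rewrite exchange_big; apply: eq_bigr => w _; rewrite -stat mulr_suml.
  by apply: eq_bigr => u _; rewrite mulrA.
by rewrite addrK.
Qed.

End Graph.
Section Tree.
Variables (R : realType) (T : finType) (e : rel T) (i : T).
Hypothesis esym : symmetric e.
Hypothesis eirr : irreflexive e.
Hypothesis acyc : forall c : seq T, uniq c -> (2 < size c)%N -> ~~ cycle e c.
Hypothesis conn : forall x y : T, connect e x y.
Notation step := (bbrw_step e R).
Notation Sv := (@Sv R T e i).

Fixpoint pw u v (q : seq T) : bool :=
  match q with [::] => true | w :: q' => (0 < step u v w) && pw v w q' end.

Lemma step_pos u v w : e v w -> w != u -> 0 < step u v w.
Proof.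
move=> vw wu.
have wS : w \in nbr e v :\ u by rewrite in_setD1 wu finset.in_set.
have : (0 < #|nbr e v :\ u|)%N by apply/card_gt0P; exists w.
rewrite /bbrw_step /= wS; case: #|_| => // k _ /=.
by rewrite mul1r invr_gt0 ltr0Sn.
Qed.

Lemma step_leaf u v : e u v -> deg e v = 1%N -> 0 < step u v u.
Proof.
move=> uv d1.
have uv' : u \in nbr e v by rewrite finset.in_set esym.
have c0 : #|nbr e v :\ u| = 0%N by move: d1; rewrite /deg (cardsD1 u) uv' add1n => -[].
by rewrite /bbrw_step /= c0 !eqxx ltr0n.
Qed.

Lemma step_edge u v w : e u v -> 0 < step u v w -> e v w.
Proof.
move=> uv; rewrite /bbrw_step /=; case: ifP => _.
  by case: eqP => [->|]; rewrite ?ltxx // esym.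
case wS: (w \in nbr e v :\ u); last by rewrite mul0r ltxx.
by move: wS; rewrite in_setD1 finset.in_set => /andP[].
Qed.

Lemma good_step n u v w : v != i -> 0 < step u v w -> Sv n v w < 1 ->
  Sv n.+1 u v < 1.
Proof.
move=> vi sp lt1 /=; rewrite vi mul1r -(@step_sum R T e u v).
rewrite (bigD1 w) //= [X in _ < X](bigD1 w) //=.
apply: ltr_leD; first by rewrite gtr_pMr.
apply: ler_sum => w' _; rewrite ler_piMr ?step_ge0 //; exact: Sv_le1.
Qed.

Lemma pw_good q u v : pw u v q -> i \in v :: q -> Sv (size q).+1 u v < 1.
Proof.
elim: q u v => [|w q IH] u v.
  by rewrite inE => _ /eqP <- /=; rewrite ?eqxx mul0r ltr01.
case/andP => sp pwq; have [vi|vi] := eqVneq v i.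
  by rewrite vi /= ?eqxx mul0r ltr01.
rewrite inE [i == v]eq_sym (negbTE vi) orFb => iwq. apply: (@good_step (size q).+1 u v w vi sp); exact: IH.
Qed.

Lemma pw_path p u v : e u v -> path e v p -> uniq (v :: p) -> u \notin p ->
  pw u v p.
Proof.
elim: p u v => [|w p IH] u v //= uv /andP[vw pth] /andP[vwp uwp].
rewrite inE negb_or => /andP[uw up].
rewrite step_pos //; last by rewrite eq_sym.
apply: IH => //; by move: vwp; rewrite inE negb_or => /andP[].
Qed.

Lemma size_uniq_le (s : seq T) : uniq s -> (size s <= #|T|)%N.
Proof. by move/card_uniqP <-; apply: max_card. Qed.

Lemma from_leaf b l : e b l -> deg e l = 1%N ->
  exists q, [&& pw b l q, i \in l :: q & (size q <= #|T|)%N].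
Proof.
move=> bl d1.
have [li|li] := eqVneq l i; first by exists [::]; rewrite /= li inE eqxx.
have [p' /and3P[pth' up' lp']] :
    exists p', [&& path e l p', uniq (l :: p') & last l p' == i].
  case/connectP: (conn l i) => p pth ->.
  case/shortenP: pth => p'' pth'' up'' _.
  by exists p''; rewrite pth'' up'' eqxx.
case: p' pth' up' lp' => [|c p] /=; first by rewrite (negbTE li).
case/andP => lc pth /andP[lcp up] lp.
have : #|nbr e l| == 1%N by rewrite -/(deg e l) d1.
case/cards1P => a Ha.
have : b \in nbr e l by rewrite finset.in_set esym.
have : c \in nbr e l by rewrite finset.in_set.
rewrite Ha !inE => /eqP ca /eqP ba; subst c; subst a.
exists (b :: p); apply/and3P; split.
- rewrite /= step_leaf //=; apply: pw_path => //.
  by move: lcp; rewrite inE negb_or => /andP[].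
- by rewrite inE -(eqP lp) mem_last orbT.
- apply: leq_trans (leqnSn _) (size_uniq_le [:: l, b & p] _).
  by rewrite /= lcp up.
Qed.

Lemma ext b a rest : uniq [:: b, a & rest] -> path e b (a :: rest) ->
  deg e b != 1%N -> exists c, [&& e b c, c != a & c \notin [:: b, a & rest]].
Proof.
move=> ur pth d1.
have ab : a \in nbr e b by rewrite finset.in_set; case/andP: pth.
have : (0 < #|nbr e b :\ a|)%N.
  move: d1; rewrite /deg (cardsD1 a) ab.
  by case: #|nbr e b :\ a|.
case/card_gt0P => c; rewrite in_setD1 finset.in_set => /andP[ca bc].
exists c; rewrite bc ca /=; apply/negP => cr.
have cb : c != b by apply: contraTneq bc => ->; rewrite eirr.
move: cr; rewrite !inE (negbTE cb) (negbTE ca) /= => crest.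
case/splitPr: crest ur pth => r1 r2 ur pth.
have H3 : (2 < size [:: b, a & rcons r1 c])%N by rewrite /= size_rcons.
have Hu : uniq [:: b, a & rcons r1 c].
  move: ur; rewrite -cat_cons -cat_rcons -!cat_cons cat_uniq => /andP[].
  by rewrite /= -cats1.
move/negP: (acyc _ Hu H3); apply.
rewrite /cycle rcons_path; apply/andP; split.
  by move: pth; rewrite -cat_rcons -cat_cons cat_path => /andP[].
by rewrite /= last_rcons esym.
Qed.
Lemma walk f b a rest : (#|T| <= f + size rest + 2)%N ->
  uniq [:: b, a & rest] -> path e b (a :: rest) ->
  exists q, [&& pw a b q, i \in b :: q & (size q <= f + #|T|)%N].
Proof.
elim: f b a rest => [|f IH] b a rest sz ur pth;
  have ab : e a b by (rewrite esym; case/andP: pth).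
- have [d1|d1] := eqVneq (deg e b) 1%N.
    have [q /and3P[q1 q2 q3]] := @from_leaf a b ab d1; exists q; by rewrite q1 q2.
  have [c /and3P[bc ca cr]] := @ext b a rest ur pth d1.
  have := size_uniq_le (c :: [:: b, a & rest]); rewrite cons_uniq cr ur => /(_ isT).
  by move: sz => /=; lia.
- have [d1|d1] := eqVneq (deg e b) 1%N.
    have [q /and3P[q1 q2 q3]] := @from_leaf a b ab d1; exists q; rewrite q1 q2 /=; exact: leq_trans q3 (leq_addl _ _).
  have [c /and3P[bc ca cr]] := @ext b a rest ur pth d1.
  have sz' : (#|T| <= f + size (a :: rest) + 2)%N by move: sz => /=; lia.
  have ur' : uniq [:: c, b, a & rest] by rewrite cons_uniq cr ur.
  have pth' : path e c [:: b, a & rest] by apply/andP; split => //; rewrite esym.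
  have [q /and3P[q1 q2 q3]] := IH c b (a :: rest) sz' ur' pth'.
  exists (c :: q); apply/and3P; split.
  + by rewrite /= step_pos // q1.
  + by rewrite inE q2 orbT.
  + by rewrite /= addSn ltnS.
Qed.

Lemma hit_all u v : e u v ->
  exists q, [&& pw u v q, i \in v :: q & (size q <= 2 * #|T|)%N].
Proof.
move=> uv.
have vu : v != u by apply: contraTneq uv => ->; rewrite eirr.
have h1 : (#|T| <= #|T| + size ([::] : seq T) + 2)%N by rewrite addn0 leq_addr.
have h2 : uniq [:: v; u] by rewrite /= inE vu.
have h3 : path e v [:: u] by rewrite /= esym uv.
have [q /and3P[q1 q2 q3]] := @walk #|T| v u [::] h1 h2 h3.
by exists q; rewrite q1 q2 /= mul2n -addnn.
Qed.

Definition K := (2 * #|T|).+1.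

Lemma SvK_lt1 u v : e u v -> Sv K u v < 1.
Proof.
move=> uv; have [q /and3P[q1 q2 q3]] := @hit_all u v uv.
apply: le_lt_trans (@pw_good q u v q1 q2); apply: Sv_monon; rewrite /K; lia.
Qed.

Definition rho := \big[Num.max/0]_(p : T * T | e p.1 p.2) Sv K p.1 p.2.

Lemma rho_lt1 : rho < 1.
Proof.
apply: (big_ind (fun x => x < 1)); first exact: ltr01.
  by move=> x y x1 y1; rewrite gt_max x1 y1.
by move=> [u v] /= uv; exact: SvK_lt1.
Qed.

Lemma rho_ge0 : 0 <= rho.
Proof.
apply: (big_ind (fun x => 0 <= x)); first exact: lexx.
  by move=> x y x1 y1; rewrite le_max x1.
by move=> [u v] uv; exact: Sv_ge0.
Qed.

Lemma Sv_le_rho u v : e u v -> Sv K u v <= rho.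
Proof. by move=> uv; rewrite /rho (bigD1 (u, v)) //= le_max lexx. Qed.

Lemma Sv_mul M m : 0 <= M -> (forall u v, e u v -> Sv m u v <= M) ->
  forall n u v, e u v -> Sv (n + m) u v <= M * Sv n u v.
Proof.
move=> M0 HM; elim=> [|n IH] u v uv; first by rewrite add0n /= mulr1; exact: HM.
rewrite addSn /= mulrCA; apply: ler_wpM2l; first exact: ler0n.
rewrite mulr_sumr; apply: ler_sum => w _.
have [vw|vw] := boolP (e v w).
  rewrite mulrCA; apply: ler_wpM2l; [exact: step_ge0 | exact: IH].
have -> : step u v w = 0.
  apply/eqP; rewrite eq_le step_ge0 andbT leNgt; apply: contra vw; exact: step_edge.
by rewrite !mul0r mulr0.
Qed.

Lemma Sv_geom j u v : e u v -> Sv (j * K) u v <= rho ^+ j.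
Proof.
elim: j u v => [|j IH] u v uv; first by rewrite mul0n /= expr0.
rewrite mulSn addnC exprS.
apply: le_trans (@Sv_mul rho K rho_ge0 Sv_le_rho (j * K) u v uv) _.
by apply: ler_wpM2l; [exact: rho_ge0 | exact: IH].
Qed.

Definition Phi n := \sum_u \sum_v (e u v)%:R * Sv n u v.

Lemma Phi_small eps : 0 < eps -> exists N, Phi N <= eps.
Proof.
move=> eps0.
set D := \sum_u \sum_v ((e u v)%:R : R).
have D0 : 0 <= D by apply: sumr_ge0 => u _; apply: sumr_ge0 => v _; exact: ler0n.
have e0 : 0 < eps / (D + 1) by rewrite divr_gt0 // ltr_wpDl.
have : `|rho| < 1 by rewrite ger0_norm ?rho_ge0 ?rho_lt1.
move/cvg_expr/cvgrPdist_le => /(_ _ e0) [N _ HN].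
have := HN N (leqnn N); rewrite /= sub0r normrN ger0_norm ?exprn_ge0 ?rho_ge0 // => HrN.
exists (N * K)%N.
have -> : eps = D * (eps / (D + 1)) + eps / (D + 1).
  by field; rewrite gt_eqF // ltr_wpDl.
apply: (@le_trans _ _ (D * (eps / (D + 1)))); last by rewrite lerDl ltW.
rewrite /Phi /D mulr_suml; apply: ler_sum => u _; rewrite mulr_suml; apply: ler_sum => v _.
case uv: (e u v); last by rewrite !mul0r.
rewrite !mul1r; exact: le_trans (@Sv_geom N u v uv) HrN.
Qed.
End Tree.
Section Main.
Variables (R : realType) (T : finType) (e : rel T) (i : T).
Hypothesis esym : symmetric e.
Hypothesis eirr : irreflexive e.
Hypothesis acyc : forall c : seq T, uniq c -> (2 < size c)%N -> ~~ cycle e c.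
Hypothesis conn : forall x y : T, connect e x y.
Hypothesis E0 : (0 < #|edges e|)%N.
Notation Sv := (@Sv R T e i).
Notation Phi := (@Phi R T e i).
Notation rd := (bbrw_return_dist e R i).

Lemma deg_pos : (0 < deg e i)%N.
Proof.
case/card_gt0P: E0 => E; rewrite finset.in_set => /existsP[x /existsP[y /andP[xy _]]].
apply/card_gt0P.
have [xi|xi] := eqVneq x i; first by exists y; rewrite finset.in_set -xi.
case/connectP: (conn i x) => -[|w p] /=; first by move=> _ ex; rewrite ex eqxx in xi.
by case/andP => iw _ _; exists w; rewrite finset.in_set.
Qed.

Let d : R := (deg e i)%:R.
Lemma d_gt0 : 0 < d. Proof. by rewrite ltr0n deg_pos. Qed.

Definition r n := \sum_v (e i v)%:R / d * Sv n i v.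

Lemma r_ge0 n : 0 <= r n.
Proof.
by apply: sumr_ge0 => v _; rewrite mulr_ge0 ?divr_ge0 ?ler0n ?Sv_ge0 // ltW ?d_gt0.
Qed.

Lemma r_mono m n : (m <= n)%N -> r n <= r m.
Proof.
move=> mn; apply: ler_sum => v _; apply: ler_wpM2l.
  by rewrite divr_ge0 ?ler0n // ltW ?d_gt0.
exact: Sv_monon.
Qed.

Lemma r_Phi n : r n = (Phi n - Phi n.+1) / d.
Proof.
rewrite /Phi (@Phi_step R T e i esym) opprB addrC subrK mulr_suml.
by apply: eq_bigr => v _; rewrite mulrAC.
Qed.

Lemma Phi_ge0 n : 0 <= Phi n.
Proof.
by apply: sumr_ge0 => u _; apply: sumr_ge0 => v _; rewrite mulr_ge0 ?ler0n ?Sv_ge0.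
Qed.

Lemma Phi_S n : Phi n.+1 = Phi n - r n * d.
Proof. by rewrite r_Phi divfK ?gt_eqF ?d_gt0 // opprB addrC subrK. Qed.

Lemma Phi_mono m n : (m <= n)%N -> Phi n <= Phi m.
Proof.
move/subnK <-; elim: (n - m)%N => [|k IH] //=.
rewrite addSn Phi_S (le_trans _ IH) // lerBlDr lerDl mulr_ge0 ?r_ge0 // ltW ?d_gt0.
Qed.

Lemma Phi0 : Phi 0 = (2 * #|edges e|)%:R.
Proof.
rewrite -(@edge_count R T e esym eirr); apply: eq_bigr => u _; apply: eq_bigr => v _.
by rewrite /= mulr1.
Qed.

Lemma r0 : r 0 = 1.
Proof.
rewrite /r /=; under eq_bigr do rewrite mulr1.
by rewrite -mulr_suml (@deg_sum R T e) divff // gt_eqF ?d_gt0.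
Qed.

Lemma rdS n : rd n.+1 = r n - r n.+1.
Proof.
rewrite rd_eq /r -sumrB; apply: eq_bigr => v _.
by rewrite G_Sv mulrBr.
Qed.

Lemma r_le_Phi n : r n <= Phi n / d.
Proof.
rewrite r_Phi; apply: ler_wpM2r; first by rewrite invr_ge0 ltW ?d_gt0.
by rewrite lerBlDr lerDl Phi_ge0.
Qed.

Lemma seriesS (u : nat -> R) n : series u n.+1 = series u n + u n.
Proof. by rewrite /series /= big_nat_recr. Qed.

Lemma series_rd n : series rd n.+1 = 1 - r n.
Proof.
elim: n => [|n IH].
  by rewrite /series /= big_nat1 /= r0 subrr.
by rewrite seriesS IH rdS addrA subrK.
Qed.

Lemma series_mean n :
  series (fun m => m%:R * rd m) n.+1 = (Phi 0 - Phi n) / d - n%:R * r n.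
Proof.
elim: n => [|n IH].
  by rewrite /series /= big_nat1 /= mul0r subrr mul0r mul0r subr0.
rewrite seriesS IH rdS Phi_S.
have d0 : d != 0 by rewrite gt_eqF ?d_gt0.
rewrite -addn1 natrD; field; exact: d0.
Qed.

Lemma half_bound n : n%:R * r n <= 2 * (Phi n./2 / d).
Proof.
set h := n./2; set k := (n - h)%N.
have hn : (h + k = n)%N.
  have := odd_double_half n; rewrite -/h -mul2n /k; lia.
have nk : (n <= 2 * k)%N.
  have := odd_double_half n; rewrite -/h -mul2n /k; case: (odd n) => /=; lia.
have S : \sum_(h <= j < h + k) r j = (Phi h - Phi (h + k)) / d.
  elim: k {hn nk} => [|k IH]; first by rewrite addn0 big_geq // subrr mul0r.
  rewrite addnS big_nat_recr ?leq_addr //= IH r_Phi -mulrDl; congr (_ * _).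
  by rewrite addrA subrK.
have L : k%:R * r n <= \sum_(h <= j < h + k) r j.
  rewrite -hn; have -> : k%:R * r (h + k) = \sum_(h <= j < h + k) r (h + k).
    by rewrite sumr_const_nat addKn mulr_natl.
  apply: ler_sum_nat => j /andP[_ jk]; apply: r_mono; exact: ltnW.
apply: (@le_trans _ _ ((2 * k)%:R * r n)).
  by apply: ler_wpM2r; [exact: r_ge0 | rewrite ler_nat].
rewrite natrM -mulrA; apply: ler_wpM2l; first exact: ler0n.
apply: le_trans L _; rewrite S.
apply: ler_wpM2r; first by rewrite invr_ge0 ltW ?d_gt0.
by rewrite lerBlDr lerDl Phi_ge0.
Qed.


Lemma cvg1 : series rd @ \oo --> (1 : R).
Proof.
apply/cvgrPdist_le => eps eps0.
have [N HN] := @Phi_small R T e i esym eirr acyc conn (eps * d) (mulr_gt0 eps0 d_gt0).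
exists N.+1 => // t /= Nt.
case: t Nt => [|n] // Nn.
rewrite series_rd opprB addrCA subrr addr0 ger0_norm ?r_ge0 //.
apply: le_trans (r_le_Phi n) _.
rewrite ler_pdivrMr ?d_gt0 //; apply: le_trans HN.
exact: Phi_mono.
Qed.

Lemma cvg2 : series (fun m => m%:R * rd m) @ \oo --> ((2 * #|edges e|)%:R / d).
Proof.
apply/cvgrPdist_le => eps eps0.
have e3 : 0 < eps * d / 3 by rewrite divr_gt0 // mulr_gt0 // d_gt0.
have [N HN] := @Phi_small R T e i esym eirr acyc conn (eps * d / 3) e3.
exists (2 * N).+1 => // t /= Nt.
case: t Nt => [|n] // Nn.
have d0 : d != 0 by rewrite gt_eqF ?d_gt0.
have hN : (N <= n./2)%N.
  have := odd_double_half n; rewrite -mul2n; move: Nn; case: (odd n) => /=; lia.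
have nN : (N <= n)%N by move: Nn; lia.
rewrite series_mean Phi0.
have -> : (2 * #|edges e|)%:R / d - (((2 * #|edges e|)%:R - Phi n) / d - n%:R * r n)
   = Phi n / d + n%:R * r n by field.
have id0 : 0 <= d^-1 by rewrite invr_ge0 ltW ?d_gt0.
rewrite ger0_norm; last by rewrite addr_ge0 ?mulr_ge0 ?Phi_ge0 ?ler0n ?r_ge0.
have h1 : Phi n / d <= Phi N / d by apply: ler_wpM2r => //; exact: Phi_mono.
have h2 : n%:R * r n <= 2 * (Phi N / d).
  apply: le_trans (half_bound n) _; apply: ler_wpM2l; first exact: ler0n.
  by apply: ler_wpM2r => //; exact: Phi_mono.
have h3 : Phi N / d <= eps / 3.
  by rewrite ler_pdivrMr ?d_gt0 // mulrAC.
lra.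
Qed.

End Main.

Theorem lemma6 (R : realType) (T : finType) (e : rel T) (i : T) :
  simple_graph e -> is_tree e -> (0 < #|edges e|)%N ->
  series (bbrw_return_dist e R i) @ \oo --> (1 : R) /\
  series (fun n => n%:R * bbrw_return_dist e R i n) @ \oo
    --> ((2 * #|edges e|)%:R / (deg e i)%:R : R).
Proof.
move=> [esym eirr] [conn acyc] E0; split.
  exact: (@cvg1 R T e i esym eirr acyc conn E0).
exact: (@cvg2 R T e i esym eirr acyc conn E0).
Qed.
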